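(* Let $n$, $k$, $t$ be positive integers with $k\geq t+1$ and $n\geq 2k$, and let $V$ be an $n$-dimensional vector space over $\mathbb{F}_q$. Suppose $\mathcal{F}\subseteq{V\brack k}$ is a maximal (with respect to inclusion) almost $t$-intersecting family with $\tau_t(\mathcal{F})\leq k$. If $\mathcal{T}$ is the set of all $t$-covers of $\mathcal{F}$ of dimension $\tau_t(\mathcal{F})$, then $\mathcal{T}$ is $t$-intersecting, i.e. $\dim(T_1\cap T_2)\geq t$ for all $T_1,T_2\in\mathcal{T}$.
   Context: $q$ is a prime power; ${W\brack k}$ is the set of $k$-dimensional subspaces of $W$. A family $\mathcal{F}\subseteq{V\brack k}$ is almost $t$-intersecting if for each $F\in\mathcal{F}$ there is at most one $F'\in\mathcal{F}$ with $\dim(F\cap F')<t$. A subspace $W$ is a $t$-cover of $\mathcal{F}$ if $\dim(W\cap F)\geq t$ for all $F\in\mathcal{F}$; $\tau_t(\mathcal{F})$ is the minimum dimension of a $t$-cover of $\mathcal{F}$. *)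

(* Defs.v *)
(* V is a finite-dimensional vector space (vectType) over a
   finite field F (so |F| = q is a prime power); subspaces are {vspace V}. *)
From HB Require Import structures.
From mathcomp Require Import all_boot all_algebra.
Set Implicit Arguments. Unset Strict Implicit. Unset Printing Implicit Defensive.
Import GRing.Theory.
Local Open Scope vspace_scope.

Definition vfamily (F : fieldType) (V : vectType F) := {vspace V} -> Prop.

Definition k_family (F : fieldType) (V : vectType F) (k : nat) (Fm : vfamily V) :=
  forall U, Fm U -> \dim U = k.

(* almost t-intersecting: for each A in Fm there is at most one B in Fm
   with dim (A :&: B) < t. *)
Definition almost_t_intersecting (F : fieldType) (V : vectType F) (t : nat)
  (Fm : vfamily V) :=
  forall A B C, Fm A -> Fm B -> Fm C ->
    (\dim (A :&: B) < t)%N -> (\dim (A :&: C) < t)%N -> B = C.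

Definition t_cover (F : fieldType) (V : vectType F) (t : nat) (Fm : vfamily V)
  (W : {vspace V}) :=
  forall A, Fm A -> (t <= \dim (W :&: A))%N.

Definition is_tau (F : fieldType) (V : vectType F) (t : nat) (Fm : vfamily V)
  (m : nat) :=
  (exists W, t_cover t Fm W /\ \dim W = m) /\
  (forall W, t_cover t Fm W -> (m <= \dim W)%N).

Definition maximal_almost_t_intersecting (F : fieldType) (V : vectType F)
  (k t : nat) (Fm : vfamily V) :=
  k_family k Fm /\ almost_t_intersecting t Fm /\
  (forall G : vfamily V, k_family k G -> almost_t_intersecting t G ->
     (forall U, Fm U -> G U) -> forall U, G U -> Fm U).

(* Main.v *)
Require Import Defs.
From HB Require Import structures.
From mathcomp Require Import all_boot all_algebra.
From mathcomp Require Import zify.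
Local Open Scope vspace_scope.

Theorem lemma5p2 (F : finFieldType) (V : vectType F) (n k t : nat)
  (Fm : vfamily V) (m : nat) :
  (0 < t)%N -> (t.+1 <= k)%N -> (2 * k <= n)%N -> \dim {: V} = n ->
  maximal_almost_t_intersecting k t Fm ->
  is_tau t Fm m -> (m <= k)%N ->
  forall T1 T2 : {vspace V},
    t_cover t Fm T1 -> \dim T1 = m ->
    t_cover t Fm T2 -> \dim T2 = m ->
    (t <= \dim (T1 :&: T2))%N.
Proof.
move=> _ htk hkn hn [hk [hal hmax]] _ hmk T1 T2 c1 d1 c2 d2.
rewrite leqNgt; apply/negP => hlt.
set S := (T1 + T2)%VS.
set C := (S^C)%VS.
have hdS : (\dim S <= 2 * m)%N.
  case: (dimv_add_leqif T1 T2) => h _; rewrite d1 d2 in h. move: h. rewrite /S. lia.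
have hdC : \dim C = (n - \dim S)%N by rewrite /C dimv_compl hn.
set X := take (k - m) (vbasis C).
have sizeX : size X = (k - m)%N.
  by rewrite size_takel // size_tuple hdC; lia.
have freeX : free X.
  apply: (@catl_free _ _ (drop (k - m) (vbasis C))).
  by rewrite cat_take_drop; apply: basis_free (vbasisP C).
set W := <<X>>%VS.
have dW : \dim W = (k - m)%N by rewrite -sizeX; apply/eqP.
have WC : (W <= C)%VS.
  apply/span_subvP => x /mem_take hx.
  by rewrite -(span_basis (vbasisP C)); apply: memv_span.
have SC0 : (S :&: C = 0)%VS by apply: capv_compl.
have T1S : (T1 <= S)%VS by apply: addvSl.
have T2S : (T2 <= S)%VS by apply: addvSr.
have T1W0 : (T1 :&: W = 0)%VS.
  apply/eqP; rewrite -subv0 -SC0; apply/subvP => x /memv_capP [h1 h2].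
  by apply/memv_capP; split; [apply: (subvP T1S) | apply: (subvP WC)].
set U := (T1 + W)%VS.
have dU : \dim U = k by rewrite /U dimv_disjoint_sum // d1 dW; lia.
have UT2 : (U :&: T2 <= T1 :&: T2)%VS.
  apply/subvP => x /memv_capP [/memv_addP [a ha [w hw ->]] h2].
  have hwS : w \in S.
    have -> : w = ((a + w) - a)%R by rewrite GRing.addrC GRing.addKr.
    by apply: memvB; [apply: (subvP T2S) | apply: (subvP T1S)].
  have : w \in (S :&: C)%VS by apply/memv_capP; split => //; apply: (subvP WC).
  rewrite SC0 memv0 => /eqP hw0; move: h2; rewrite hw0 GRing.addr0 => h2.
  by apply/memv_capP.
have T1U : (T1 <= U)%VS by apply: addvSl.
have covU : forall A, Fm A -> (t <= \dim (U :&: A))%N.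
  move=> A hA; apply: leq_trans (c1 A hA) _; apply: dimvS.
  by rewrite subv_cap capvSr andbT; apply: subv_trans (capvSl _ _) T1U.
pose G := fun X : {vspace V} => Fm X \/ X = U.
have kG : k_family k G by move=> X0 [/hk|->].
have goodU : forall X0, G X0 -> (t <= \dim (U :&: X0))%N.
  move=> X0 [/covU //|->]; rewrite capvv dU; lia.
have aG : almost_t_intersecting t G.
  move=> A B D hA hB hD hAB hAD.
  case: hA => [hA|hAU].
  - case: hB => [hB|hB]; last first.
      by move: hAB; rewrite hB capvC => hAB; have := covU _ hA; lia.
    case: hD => [hD|hD]; last first.
      by move: hAD; rewrite hD capvC => hAD; have := covU _ hA; lia.
    exact: hal hAB hAD.
  - by move: hAB; rewrite hAU => hAB; have := goodU _ hB; lia.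
have FU : Fm U by apply: (hmax G kG aG) => [X0 h|]; [left|right].
have := c2 U FU; rewrite capvC => h.
have := dimvS UT2; lia.
Qed.
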